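(* Let ${\bm k}$ be a field of characteristic different from $2$, let $n\ge 1$, and let $\hat{A}_{n,{\bm k}}$ be the completed $n$-th Weyl algebra over ${\bm k}$. For $i=1,\dots,n$ let $$X_i = x_i + \sum_{l = 1}^n x_l\sum_{N = 1}^\infty \sum_{j = 1}^n p^{N-1,l}_{ij}(\partial^1,\ldots,\partial^n)\,\partial^j \in \hat{A}_{n,{\bm k}},$$ where, for each $N\ge 1$ and $i,j,l\in\{1,\dots,n\}$, $p^{N-1,l}_{ij}(\partial^1,\ldots,\partial^n)$ is an arbitrary homogeneous polynomial of degree $N-1$ in $\partial^1,\ldots,\partial^n$ with coefficients in ${\bm k}$, antisymmetric in the lower indices: $p^{N-1,l}_{ij}=-p^{N-1,l}_{ji}$. Then for every integer $k\ge 1$ and every function $\alpha:\{1,\ldots,k\}\to\{1,\ldots,n\}$, writing $\alpha_i=\alpha(i)$, $$\sum_{\sigma\in\Sigma(k)} X_{\alpha_{\sigma(1)}}\cdots X_{\alpha_{\sigma(k)}} \triangleright 1 = k!\,x_{\alpha_1}\cdots x_{\alpha_k},$$ where $\Sigma(k)$ is the symmetric group on $k$ letters.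
   Context: The $n$-th Weyl algebra $A_{n,{\bm k}}$ is the associative ${\bm k}$-algebra generated by $x_1,\ldots,x_n,\partial^1,\ldots,\partial^n$ subject to the relations $[x_i,x_j]=0$, $[\partial^i,\partial^j]=0$, $[\partial^j,x_i]=\delta^j_i$ (equivalently $x_i\partial^j-\partial^j x_i=-\delta_i^j$) for all $i,j$. Its completion $\hat{A}_{n,{\bm k}}$ with respect to the filtration by the degree of differential operators consists of arbitrary formal power series in $\partial^1,\ldots,\partial^n$ with coefficients (written on the left) in the commutative polynomial ring ${\bm k}[x_1,\ldots,x_n]$. The Fock action $\triangleright$ of $\hat{A}_{n,{\bm k}}$ on ${\bm k}[x_1,\ldots,x_n]$ is the one in which $x_i$ acts by multiplication by $x_i$ and $\partial^j$ acts as the partial derivative $\partial/\partial x_j$ (on a given polynomial only finitely many terms of a power series act nontrivially); $1\in{\bm k}[x_1,\ldots,x_n]$ is the vacuum. *)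

(* Defs.v *)
From HB Require Import structures.
From mathcomp Require Import all_boot all_algebra all_fingroup.
From mathcomp Require Export mpoly.
Set Implicit Arguments. Unset Strict Implicit. Unset Printing Implicit Defensive.
Import GRing.Theory.
Local Open Scope ring_scope.

(* Fock representation of the (completed) Weyl algebra on F[x_1..x_n]:
   x_i acts as multiplication by 'X_i, d^j acts as the partial derivative
   mderiv j.  A polynomial q(d^1,...,d^n) in the derivations (represented by
   an mpoly q in n variables) acts by  sum_m q_m * d^m. *)
Section Fock.
Context (F : fieldType) (n : nat).

Definition dact (q f : {mpoly F[n]}) : {mpoly F[n]} :=
  \sum_(m <- msupp q) q@_m *: mderivm m f.

(* Fock action of
     X_i = x_i + sum_l x_l sum_{N>=1} sum_j p^{N-1,l}_{ij}(d) d^j,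
   where p N l i j stands for p^{N,l}_{ij} (homogeneous of degree N, so the
   paper's index N-1 is our N, ranging over N >= 0).  On f only the terms
   with N < msize f (= total degree of f + 1) can act nontrivially (the
   operator p N l i j (d) d^j has order N+1), so the formal series over N
   acts on f by this finite sum. *)
Definition Xop (p : nat -> 'I_n -> 'I_n -> 'I_n -> {mpoly F[n]})
    (i : 'I_n) (f : {mpoly F[n]}) : {mpoly F[n]} :=
  'X_i * f + \sum_(l < n) 'X_l *
     \sum_(N < msize f) \sum_(j < n) dact (p N l i j) (mderiv j f).

Definition word_act (p : nat -> 'I_n -> 'I_n -> 'I_n -> {mpoly F[n]})
    (w : seq 'I_n) (f : {mpoly F[n]}) : {mpoly F[n]} :=
  foldr (Xop p) f w.

End Fock.

(* Main.v *)
Require Import Defs.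
From HB Require Import structures.
From mathcomp Require Import all_boot all_algebra all_fingroup.
From mathcomp Require Import mpoly.
Import GRing.Theory.
Local Open Scope ring_scope.

Section Helpers.
Context (F : fieldType) (n : nat).
Local Notation P := {mpoly F[n]}.

Lemma dX (i j : 'I_n) : mderiv j ('X_i : P) = (i == j)%:R.
Proof.
rewrite mderivX mnm1E; case: eqP => [->|_]; last by rewrite scale0r.
have -> : (U_(j) - U_(j) = 0)%MM by apply/mnmP => k; rewrite mnmBE subnn mnm0E.
by rewrite mpolyX0 scale1r.
Qed.

Lemma dactD (q f g : P) : dact q (f + g) = dact q f + dact q g.
Proof. by rewrite /dact -big_split; apply: eq_bigr => m _; rewrite mderivmD scalerDr. Qed.

Lemma dactZ (q f : P) c : dact q (c *: f) = c *: dact q f.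
Proof.
rewrite /dact scaler_sumr; apply: eq_bigr => m _.
by rewrite mderivmZ !scalerA mulrC.
Qed.

Lemma dact0 (q : P) : dact q 0 = 0.
Proof. by have := dactZ q 0 0; rewrite !scale0r. Qed.

Lemma dact_sum (I : Type) (r : seq I) (Q : pred I) (q : P) (f : I -> P) :
  dact q (\sum_(t <- r | Q t) f t) = \sum_(t <- r | Q t) dact q (f t).
Proof. exact: (big_morph _ (dactD q) (dact0 q)). Qed.

Lemma dactN (q f : P) : dact (- q) f = - dact q f.
Proof.
rewrite /dact (perm_big _ (msuppN q)) -sumrN; apply: eq_bigr => m _.
by rewrite mcoeffN scaleNr.
Qed.

Lemma mderivm_big (m : 'X_{1..n}) (g : P) : (msize g <= mdeg m)%N -> mderivm m g = 0.
Proof.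
move=> le; rewrite mderivmE big1_seq // => m' /andP[_ m'g].
have lt := msize_mdeg_lt m'g.
case: (boolP [exists i, m' i < m i]%N) => [/existsP[i lti]|].
  by rewrite (bigD1 i) //= ffact_small // mul0n mulr0 scale0r.
move/existsPn => H; exfalso.
have: (mdeg m <= mdeg m')%N.
  by rewrite !mdegE; apply: leq_sum => i _; have := H i; rewrite -leqNgt.
by rewrite leqNgt (leq_trans lt le).
Qed.

Lemma dact_big (N : nat) (q f : P) (j : 'I_n) :
  q \is N.-homog -> (msize f <= N)%N -> dact q (mderiv j f) = 0.
Proof.
move=> /dhomogP hq le; rewrite /dact big1_seq // => m /andP[_ mq].
rewrite -mderivmU1m -mderivmDm mderivm_big ?scaler0 //.
by rewrite mdegD mdeg1 hq // (leq_trans le).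
Qed.

End Helpers.

Section Main.
Context (F : fieldType) (n : nat)
  (p : nat -> 'I_n -> 'I_n -> 'I_n -> {mpoly F[n]}).
Local Notation P := {mpoly F[n]}.
Hypothesis hom : forall N l i j, p N l i j \is N.-homog.

Definition XopB (B : nat) (i : 'I_n) (f : P) : P :=
  'X_i * f + \sum_(l < n) 'X_l *
     \sum_(N < B) \sum_(j < n) dact (p N l i j) (mderiv j f).

Lemma XopBE B i f : (msize f <= B)%N -> Xop p i f = XopB B i f.
Proof.
move=> le; rewrite /Xop /XopB; congr (_ + _); apply: eq_bigr => l _; congr (_ * _).
rewrite (big_ord_widen B (fun N => \sum_(j < n) dact (p N l i j) (mderiv j f)) le).
rewrite [RHS](bigID (fun N : 'I_B => (N < msize f)%N)) /= [X in _ = _ + X]big1 ?addr0 //.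
move=> N; rewrite -leqNgt => le'; apply: big1 => j _.
exact: dact_big (hom _ _ _ _) le'.
Qed.

Lemma XopBD B i f g : XopB B i (f + g) = XopB B i f + XopB B i g.
Proof.
rewrite /XopB mulrDr addrACA; congr (_ + _).
rewrite -big_split; apply: eq_bigr => l _ /=; rewrite -mulrDr; congr (_ * _).
rewrite -big_split; apply: eq_bigr => N _.
rewrite -big_split; apply: eq_bigr => j _.
by rewrite mderivD dactD.
Qed.

Lemma XopBZ B i c f : XopB B i (c *: f) = c *: XopB B i f.
Proof.
rewrite /XopB scalerDr scalerAr; congr (_ + _).
rewrite scaler_sumr; apply: eq_bigr => l _; rewrite scalerAr; congr (_ * _).
rewrite scaler_sumr; apply: eq_bigr => N _.
rewrite scaler_sumr; apply: eq_bigr => j _.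
by rewrite mderivZ dactZ.
Qed.

Lemma XopB0 B i : XopB B i 0 = 0.
Proof. by have := XopBZ B i 0 0; rewrite !scale0r. Qed.

Lemma XopZ i c f : Xop p i (c *: f) = c *: Xop p i f.
Proof.
by rewrite (XopBE (msize f) i) ?msizeZ_le // XopBZ -XopBE.
Qed.

Lemma Xop_sum (I : finType) i (f : I -> P) :
  \sum_(t : I) Xop p i (f t) = Xop p i (\sum_(t : I) f t).
Proof.
pose B := (msize (\sum_(t : I) f t) + \sum_(t : I) msize (f t))%N.
rewrite (XopBE B) ?leq_addr //.
rewrite (big_morph _ (XopBD B i) (XopB0 B i)); apply: eq_bigr => t _.
apply: XopBE; by rewrite /B [X in (_ + X)%N](bigD1 t) //= addnCA leq_addr.
Qed.


Lemma mderiv_prod (T : finType) (f : T -> P) j (A : {set T}) :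
  mderiv j (\prod_(b in A) f b) =
    \sum_(c in A) mderiv j (f c) * \prod_(b in A :\ c) f b.
Proof.
elim: {A}_.+1 {-2}A (ltnSn #|A|) => // m IH A ltA.
case: (set_0Vmem A) => [->|[x xA]].
  by rewrite !big_set0 -mpolyC1 mderivC.
rewrite (big_setD1 x xA) /= mderivM IH; last first.
  by move: ltA; rewrite (cardsD1 x A) xA add1n ltnS.
rewrite [RHS](big_setD1 x xA) /=; congr (_ + _).
rewrite mulr_sumr; apply: eq_bigr => c; rewrite !inE => /andP[cx cA].
rewrite [X in _ = _ * X](big_setD1 x); last by rewrite !inE eq_sym cx xA.
have -> : A :\ c :\ x = A :\ x :\ c by rewrite !setDDl setUC.
by rewrite mulrCA.
Qed.

Lemma mderiv_prodX (K : nat) (alpha : 'I_K -> 'I_n) j (A : {set 'I_K}) :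
  mderiv j (\prod_(b in A) ('X_(alpha b) : P)) =
    \sum_(c in A) (alpha c == j)%:R *: \prod_(b in A :\ c) ('X_(alpha b) : P).
Proof.
rewrite mderiv_prod; apply: eq_bigr => c _.
by rewrite dX mulr_natl scaler_nat.
Qed.

Lemma antisym_zero (K : nat) (alpha : 'I_K -> 'I_n) (q : 'I_n -> 'I_n -> P) :
  (2%:R : F) != 0 -> (forall i j, q i j = - q j i) ->
  \sum_(a : 'I_K) \sum_(j < n)
     dact (q (alpha a) j) (mderiv j (\prod_(b in [set~ a]) ('X_(alpha b) : P))) = 0.
Proof.
move=> two qA.
pose H a c := dact (q (alpha a) (alpha c))
                 (\prod_(b in [set~ a] :\ c) ('X_(alpha b) : P)).
have E a : \sum_(j < n) dact (q (alpha a) j)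
              (mderiv j (\prod_(b in [set~ a]) ('X_(alpha b) : P)))
           = \sum_(c : 'I_K) (if c != a then H a c else 0).
  rewrite [LHS](eq_bigr (fun j => \sum_(c in [set~ a]) dact (q (alpha a) j)
     ((alpha c == j)%:R *: \prod_(b in [set~ a] :\ c) ('X_(alpha b) : P)))); last first.
    by move=> j _; rewrite mderiv_prodX dact_sum.
  rewrite exchange_big /= -big_mkcond; apply: eq_big => [c|c _]; first by rewrite !inE.
  under eq_bigr => j _ do rewrite dactZ.
  rewrite (bigD1 (alpha c)) //= eqxx mulr1n scale1r [X in _ + X]big1 ?addr0 // => j ne.
  by rewrite eq_sym (negPf ne) scale0r.
under eq_bigr => a _ do rewrite E.
set S := \sum_a _.
have HS : S = - S.
  rewrite {2}/S -sumrN [LHS]exchange_big /=; apply: eq_bigr => x _.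
  rewrite -sumrN; apply: eq_bigr => y _.
  rewrite [y == x]eq_sym; case: eqP => [_|/eqP ne]; first by rewrite oppr0.
  rewrite /H qA dactN.
  by have -> : [set~ y] :\ x = [set~ x] :\ y by apply/setP => b; rewrite !inE andbC.
have : (2%:R : F) *: S = 0 by rewrite scaler_nat mulr2n {1}HS addNr.
move/(congr1 (fun v => (2%:R : F)^-1 *: v)).
by rewrite scalerA mulVf // scale1r scaler0.
Qed.


Lemma prod_lift (K : nat) (j : 'I_K) (G : 'I_K -> P) :
  \prod_(i < K.-1) G (lift j i) = \prod_(b in [set~ j]) G b.
Proof.
rewrite (eq_bigl (fun b => b != j)); last by move=> b; rewrite !inE.
rewrite (reindex_omap (lift j) (unlift j)) /=.
  by apply: eq_bigl => i; rewrite liftK eqxx eq_sym neq_lift.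
by move=> i ij; case: unliftP ij => [k ->|->] //; rewrite eqxx.
Qed.

Lemma step (K : nat) (alpha : 'I_K -> 'I_n) (c : F) :
  (2%:R : F) != 0 -> (forall N l i j, p N l i j = - p N l j i) ->
  \sum_(a : 'I_K) c *: Xop p (alpha a) (\prod_(b in [set~ a]) ('X_(alpha b) : P))
  = (c *+ K) *: \prod_(b : 'I_K) ('X_(alpha b) : P).
Proof.
move=> two pA.
pose B := (\sum_(a : 'I_K) msize (\prod_(b in [set~ a]) ('X_(alpha b) : P)))%N.
rewrite -scaler_sumr.
rewrite (eq_bigr (fun a => XopB B (alpha a) (\prod_(b in [set~ a]) ('X_(alpha b) : P)))); last first.
  by move=> a _; apply: XopBE; rewrite /B [X in (_ <= X)%N](bigD1 a) //= leq_addr.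
rewrite /XopB big_split /=.
rewrite [X in _ + X](_ : _ = 0); last first.
  rewrite exchange_big /= big1 // => l _.
  rewrite -mulr_sumr exchange_big /= big1 ?mulr0 // => N _.
  exact: (antisym_zero _ alpha (p N l) two (pA N l)).
rewrite addr0 (eq_bigr (fun _ => \prod_(b : 'I_K) ('X_(alpha b) : P))); last first.
  move=> a _; rewrite [RHS](bigD1 a) //=; congr (_ * _).
  by apply: eq_bigl => b; rewrite !inE.
by rewrite sumr_const card_ord -scalerMnr scalerMnl.
Qed.

Lemma main_ind : (2%:R : F) != 0 -> (forall N l i j, p N l i j = - p N l j i) ->
  forall k (alpha : 'I_k -> 'I_n),
  \sum_(s : 'S_k) word_act p [seq alpha (s i) | i <- enum 'I_k] 1
    = k`!%:R *: \prod_(b : 'I_k) ('X_(alpha b) : P).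
Proof.
move=> two pA; elim => [|k IH] alpha.
  have -> : enum 'I_0 = [::] by apply/size0nil; rewrite size_enum_ord.
  by rewrite sumr_const card_Sn big_ord0 /= scale1r.
rewrite (partition_big (fun s : 'S_k.+1 => s ord0) predT) //=.
rewrite (eq_bigr (fun a => k`!%:R *: Xop p (alpha a)
           (\prod_(b in [set~ a]) ('X_(alpha b) : P)))); last first.
  move=> a _.
  rewrite (reindex (lift_perm ord0 a)) /=; last first.
    pose ulsf i (s : 'S_k.+1) kk := odflt kk (unlift (s i) (s (lift i kk))).
    have ulsfK i (s : 'S_k.+1) kk: lift (s i) (ulsf i s kk) = s (lift i kk).
      rewrite /ulsf; have:= neq_lift i kk.
      by rewrite -(can_eq (permK s)) => /unlift_some[] ? ? ->.
    have inj_ulsf: injective (ulsf ord0 _).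
      move=> s; apply: can_inj (ulsf (s ord0) s^-1%g) _ => k'.
      by rewrite {1}/ulsf ulsfK !permK liftK.
    exists (fun s => perm (inj_ulsf s)) => [s _ | s].
      by apply/permP=> k'; rewrite permE /ulsf lift_perm_lift lift_perm_id liftK.
    move/(s _ =P _) => si0; apply/permP=> k'.
    case: (unliftP ord0 k') => [k''|] ->; rewrite ?lift_perm_id //.
    by rewrite lift_perm_lift -si0 permE ulsfK.
  rewrite (eq_bigl predT) => [|t]; last by rewrite lift_perm_id eqxx.
  rewrite (eq_bigr (fun t : 'S_k => Xop p (alpha a)
       (word_act p [seq (alpha \o lift a) (t i) | i <- enum 'I_k] 1))); last first.
    move=> t _; rewrite enum_ordSl /word_act /= lift_perm_id -map_comp /=.
    congr (Xop _ _ (foldr _ _ _)); apply: eq_map => i /=.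
    by rewrite lift_perm_lift.
  rewrite Xop_sum IH XopZ; congr (_ *: Xop _ _ _).
  exact: (prod_lift _ a (fun b => ('X_(alpha b) : P))).
rewrite step //.
have -> : (k`!%:R : F) *+ k.+1 = k.+1`!%:R by rewrite factS mulnC natrM mulr_natr.
by [].
Qed.

End Main.
Theorem theorem2p1 (F : fieldType) (n : nat)
    (p : nat -> 'I_n -> 'I_n -> 'I_n -> {mpoly F[n]}) :
  2%N \notin [pchar F] ->
  (0 < n)%N ->
  (forall N l i j, p N l i j \is N.-homog) ->
  (forall N l i j, p N l i j = - p N l j i) ->
  forall (k : nat) (alpha : 'I_k -> 'I_n), (0 < k)%N ->
    \sum_(s : 'S_k) word_act p [seq alpha (s i) | i <- enum 'I_k] 1
      = k`!%:R * \prod_(i < k) 'X_(alpha i).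
Proof.
move=> hc _ hom pA k alpha _.
have two : (2%:R : F) != 0.
  move: hc; rewrite inE /=. by [].
by rewrite (@main_ind F n p hom two pA) mulr_natl -scaler_nat.
Qed.
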